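(* Let $\mathscr A$ be a weight vector of length $n$ and $S\subseteq\{1,\dots,n\}$ with $\Delta_S\ne\emptyset$ in $M^\delta_{0,\mathscr A}$, and let $I$ be a minimal small interval containing $S$. Then for every point of $\Delta_S$, every chord in the collection of chords describing its topological type has $I$ contained entirely in one of the two intervals into which the chord divides $\{1,\dots,n\}$ (no chord separates two elements of $I$).
   Context: A weight vector is $\mathscr A=(a_1,\dots,a_n)$ with $0<a_i\le1$ and $\sum a_i>2$. A nodal genus-zero curve with marked smooth points $x_1,\dots,x_n$ (point $x_i$ of weight $a_i$) is $\mathscr A$-stable if each component has (number of nodes) + (sum of weights of its markings) $>2$, and whenever $x_i$ coincide for all $i\in S$ one has $\sum_{i\in S}a_i\le1$; $\overline M_{0,\mathscr A}$ is Hassett's fine moduli space of such curves, a smooth projective variety. An interval is a set of cyclically consecutive elements of $\{1,\dots,n\}$ (cyclic order $1<\dots<n<1$); it is large if the sum of its weights exceeds $1$ and small otherwise. $M^\delta_{0,\mathscr A}\subset\overline M_{0,\mathscr A}$ is the open subset of curves whose dual graph admits a planar embedding inducing the standard dihedral order on the legs, and such that whenever $x_i=x_j$ for all $i,j\in S$, $S$ is contained in a small interval. Its stratification by topological type has strata indexed by collections of pairwise non-crossing chords of the $n$-gon (sides labeled $1,\dots,n$), each chord dividing the sides into two large intervals, subject to stability of each tile. For $S\subseteq\{1,\dots,n\}$, the coincidence set $\Delta_S\subseteq M^\delta_{0,\mathscr A}$ is the locus where $x_i=x_j$ for all $i,j\in S$. *)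

(* Defs.v *)
From HB Require Import structures.
From mathcomp Require Import all_boot all_order all_algebra.
Set Implicit Arguments. Unset Strict Implicit. Unset Printing Implicit Defensive.
Import Order.TTheory GRing.Theory Num.Theory.
Local Open Scope ring_scope.

Section Defs.
Variables (R : realFieldType) (n : nat) (a : 'I_n -> R).

Definition weight_vector : Prop :=
  (forall i, 0 < a i <= 1) /\ 2 < \sum_(i < n) a i.

(* The indices 0..n-1 stand for 1..n; the cyclic order is 0 < 1 < ... < n-1 < 0.
   cint s l = {s, s+1, ..., s+l-1} (mod n). *)
Definition cint (s : 'I_n) (l : nat) : {set 'I_n} :=
  [set i : 'I_n | ((i + n - s) %% n < l)%N].

Definition is_interval (X : {set 'I_n}) : Prop :=
  exists (s : 'I_n) (l : nat), (0 < l <= n)%N /\ X = cint s l.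

Definition weight (X : {set 'I_n}) : R := \sum_(i in X) a i.
Definition large (X : {set 'I_n}) : Prop := 1 < weight X.
Definition small (X : {set 'I_n}) : Prop := weight X <= 1.

(* A chord of the n-gon is represented by the set of sides on one of its two
   sides (the complementary set represents the same chord). *)
Definition separates (c : {set 'I_n}) (i j : 'I_n) : Prop :=
  (i \in c) != (j \in c).

Definition chord_ok (c : {set 'I_n}) : Prop :=
  is_interval c /\ is_interval (~: c) /\ large c /\ large (~: c).

Definition noncrossing (c d : {set 'I_n}) : Prop :=
  c \subset d \/ d \subset c \/ c :&: d = set0 \/ c :|: d = setT.

(* A point of M^delta_{0,A}, recorded by its topological type (collection of
   chords C) and its coincidence relation coin (coin i j  <->  x_i = x_j). *)
Definition is_dpoint (C : {set {set 'I_n}}) (coin : rel 'I_n) : Prop :=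
     (forall i, coin i i)
  /\ (forall i j, coin i j -> coin j i)
  /\ (forall i j k, coin i j -> coin j k -> coin i k)
  /\ (forall c, c \in C -> chord_ok c)
  /\ (forall c d, c \in C -> d \in C -> noncrossing c d)
     (* coinciding markings lie on the same component: no chord separates them *)
  /\ (forall i j c, coin i j -> c \in C -> ~ separates c i j)
  /\ (forall i, weight [set j | coin i j] <= 1)
  /\ (forall i, exists J, [/\ is_interval J, small J & [set j | coin i j] \subset J]).

Definition in_Delta (S : {set 'I_n}) (coin : rel 'I_n) : Prop :=
  forall i j, i \in S -> j \in S -> coin i j.

Definition min_small_interval (S I : {set 'I_n}) : Prop :=
  [/\ is_interval I, small I, S \subset I &
      forall J, is_interval J -> small J -> S \subset J -> J \subset I -> J = I].

End Defs.

(* Main.v *)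
Require Import Defs.
From HB Require Import structures.
From mathcomp Require Import all_boot all_order all_algebra.
From mathcomp Require Import zify.
Import Order.TTheory GRing.Theory Num.Theory.
Local Open Scope nat_scope.

Lemma modE (x n : nat) : (0 < n)%N -> (x < n + n)%N ->
  x %% n = if (x < n)%N then x else (x - n)%N.
Proof.
move=> n0 hx; case: ifP => h; first by rewrite modn_small.
have -> : x = ((x - n) + n)%N by lia.
rewrite modnDr modn_small; lia.
Qed.

Lemma cintE (n : nat) (s : 'I_n) (l : nat) (i : 'I_n) :
  (i \in cint s l) = ((s <= i)%N && (i - s < l)%N) || ((i < s)%N && (i + n - s < l)%N).
Proof.
rewrite inE.
have n0 : (0 < n)%N by have := ltn_ord s; lia.
have hi := ltn_ord i; have hs := ltn_ord s.
rewrite modE //; last lia.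
case: ifP => h.
  have -> : (s <= i) = false by lia.
  have -> : (i < s) = true by lia.
  by [].
have -> : (s <= i) = true by lia.
have -> : (i < s) = false by lia.
have -> : (i + n - s - n = i - s) by lia.
by rewrite /= orbF.
Qed.

Lemma arith (n s t l m y i e : nat) :
  s < n -> t < n -> y < n -> i < n -> 1 < l -> l <= n -> 0 < m -> m <= n ->
  e = (if s + l - 1 < n then s + l - 1 else s + l - 1 - n) ->
  ~~ ((t <= s) && (s - t < m) || (s < t) && (s + n - t < m)) ->
  ~~ ((t <= e) && (e - t < m) || (e < t) && (e + n - t < m)) ->
  ((t <= y) && (y - t < m) || (y < t) && (y + n - t < m)) ->
  ((s <= y) && (y - s < l) || (y < s) && (y + n - s < l)) ->
  ((t <= i) && (i - t < m) || (i < t) && (i + n - t < m)) ->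
  ((s <= i) && (i - s < l) || (i < s) && (i + n - s < l)).
Proof.
move=> ? ? ? ? ? ? ? ? He; move: He; case: ltnP => ? He; case: (leqP t s) => ?; case: (leqP s y) => ?; case: (leqP s i) => ?;
 case: (leqP t y) => ?; case: (leqP t i) => ?; case: (leqP t e) => ? /=; lia.
Qed.

Local Open Scope ring_scope.

Lemma weight_sub (R : realFieldType) (n : nat) (a : 'I_n -> R)
  (pos : forall i, 0 < a i) (A B : {set 'I_n}) :
  A \subset B -> weight a A <= weight a B.
Proof.
move=> AB; rewrite /weight [X in _ <= X](big_setID A) /= (setIidPr AB) lerDl.
by apply: sumr_ge0 => i _; apply: ltW.
Qed.

Lemma core (R : realFieldType) (n : nat) (a : 'I_n -> R)
  (pos : forall i, 0 < a i) (S D I : {set 'I_n}) :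
  S \subset D -> is_interval (~: D) -> large a (~: D) ->
  min_small_interval a S I -> I \subset D \/ I \subset ~: D.
Proof.
move=> SD [t [m [/andP [m0 mn] E]]] Elarge [[s [l [/andP [l0 ln] HIe]]] Ism SI Imin].
subst I.
have n0 : (0 < n)%N by have := ltn_ord s; lia.
have hs := ltn_ord s; have ht := ltn_ord t.
have [l1|l2] : l = 1%N \/ (1 < l)%N by lia.
  subst l.
  have Hs : forall i, i \in cint s 1 -> i = s.
    move=> i; rewrite cintE => H; apply/val_inj => /=.
    have := ltn_ord i; lia.
  case: (boolP (s \in D)) => sD; [left|right]; apply/subsetP => i /Hs -> //.
  by rewrite inE.
have isub : forall J, is_interval J -> S \subset J -> J \subset cint s l -> J = cint s l.
  move=> J Ji SJ JI; apply: Imin => //.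
  rewrite /small; apply: le_trans Ism; exact: weight_sub.
pose s1 := Ordinal (ltn_pmod (s + 1) n0).
have hs1 : nat_of_ord s1 = if (s + 1 < n)%N then (s + 1)%N else (s + 1 - n)%N.
  by rewrite /= modE //; lia.
have hsD : s \in D.
  apply: contraT => sD.
  have J := isub (cint s1 (l - 1)).
  have : s \in cint s1 (l - 1).
    rewrite J.
    - by rewrite cintE; lia.
    - exists s1, (l - 1)%N; split => //; lia.
    - apply/subsetP => i iS.
      have iI := subsetP SI i iS.
      have iD := subsetP SD i iS.
      have ne : nat_of_ord i != nat_of_ord s.
        by apply/eqP => /val_inj h; move: iD; rewrite h (negbTE sD).
      move: iI; rewrite !cintE hs1; have := ltn_ord i; case: ifP => ?; lia.
    - apply/subsetP => i; rewrite !cintE hs1; have := ltn_ord i; case: ifP => ?; lia.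
  rewrite cintE hs1; case: ifP => ?; lia.
pose e := Ordinal (ltn_pmod (s + l - 1) n0).
have he : nat_of_ord e = if (s + l - 1 < n)%N then (s + l - 1)%N else (s + l - 1 - n)%N.
  by rewrite /= modE //; lia.
have heD : e \in D.
  apply: contraT => eD.
  have J := isub (cint s (l - 1)).
  have : e \in cint s (l - 1).
    rewrite J.
    - by rewrite cintE he; case: ifP => ?; lia.
    - exists s, (l - 1)%N; split => //; lia.
    - apply/subsetP => i iS.
      have iI := subsetP SI i iS.
      have iD := subsetP SD i iS.
      have ne : nat_of_ord i != nat_of_ord e.
        by apply/eqP => /val_inj h; move: iD; rewrite h (negbTE eD).
      move: iI ne; rewrite !cintE he; have := ltn_ord i; case: ifP => ?; lia.
    - apply/subsetP => i; rewrite !cintE; lia.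
  rewrite cintE he; case: ifP => ?; lia.
left; apply/subsetP => y yI; apply: contraT => yD.
have sE : s \notin cint t m by rewrite -E inE hsD.
have eE : e \notin cint t m by rewrite -E inE heD.
have yE : y \in cint t m by rewrite -E inE.
have sub : ~: D \subset cint s l.
  rewrite E; apply/subsetP => i.
  move: sE eE yE yI; rewrite !cintE => sE eE yE yI iE.
  exact: (@arith n s t l m y i e (ltn_ord s) (ltn_ord t) (ltn_ord y) (ltn_ord i) l2 ln m0 mn he sE eE yE yI iE).
have := @weight_sub R n a pos _ _ sub.
move: Elarge Ism; rewrite /large /small => h1 h2 h3.
have := lt_le_trans h1 (le_trans h3 h2); by rewrite ltxx.
Qed.

Theorem mainTheorem12 (R : realFieldType) (n : nat) (a : 'I_n -> R)
  (Ha : weight_vector a) (S : {set 'I_n})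
  (C : {set {set 'I_n}}) (coin : rel 'I_n)
  (Hpt : is_dpoint a C coin) (HS : in_Delta S coin)
  (I : {set 'I_n}) (HI : min_small_interval a S I) :
  forall c, c \in C -> I \subset c \/ I \subset ~: c.
Proof.
move=> c cC.
have [pos _] := Ha.
have pos' : forall i, 0 < a i by move=> i; case/andP: (pos i).
case: Hpt => _ [_ [_ [Hok [_ [Hsep _]]]]].
have [ci [cci [cl ccl]]] := Hok c cC.
case: (set_0Vmem S) => [S0|[x xS]].
  by apply: (@core R n a pos' S c I _ cci ccl HI); rewrite S0 sub0set.
case: (boolP (x \in c)) => xc.
  apply: (@core R n a pos' S c I _ cci ccl HI).
  apply/subsetP => j jS; apply: contraT => jc.
  case: (Hsep x j c (HS x j xS jS) cC).
  by rewrite /separates xc (negbTE jc).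
have [] := @core R n a pos' S (~: c) I _ _ _ HI.
- apply/subsetP => j jS; rewrite inE; apply: contraT => /negbNE jc.
  case: (Hsep x j c (HS x j xS jS) cC).
  by rewrite /separates jc (negbTE xc).
- by rewrite setCK.
- by rewrite setCK.
- by right.
- by rewrite setCK; left.
Qed.
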